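(* Let $Q$ be a non-trivial quotient of the identity functor on the category of groups. Then the essential image of $Q$ contains either a non-trivial finite cyclic group, or all free abelian groups $\mathbb{Z}^{\oplus X}$ ($X$ any set).
   Context: A quotient of the identity functor on the category of groups is a functor $Q$ together with a natural transformation $q:\mathrm{Id}\to Q$ such that each $q_G:G\to Q(G)$ is surjective (equivalently $Q(G)=G/F(G)$ for a subfunctor $F$ of the identity with $F(G)$ normal). It is non-trivial if $Q(G)\neq 1$ for some group $G$. The essential image of $Q$ is the class of groups isomorphic to $Q(G)$ for some group $G$. *)

(* Defs.v *)
From Stdlib Require Import ZArith List.
Open Scope Z_scope.

Record Group : Type := MkGroup {
  carrier :> Type;
  gmul : carrier -> carrier -> carrier;
  gone : carrier;
  ginv : carrier -> carrier;
  gmulA : forall x y z, gmul x (gmul y z) = gmul (gmul x y) z;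
  gmul1l : forall x, gmul gone x = x;
  gmulVl : forall x, gmul (ginv x) x = gone
}.

Record Hom (G H : Group) : Type := MkHom {
  hfun :> carrier G -> carrier H;
  hmul : forall x y, hfun (gmul G x y) = gmul H (hfun x) (hfun y)
}.
Arguments hfun {G H} _ _.

Definition idHom (G : Group) : Hom G G :=
  MkHom G G (fun x => x) (fun x y => eq_refl).

Definition compHom {G H K : Group} (g : Hom H K) (f : Hom G H) : Hom G K :=
  MkHom G K (fun x => g (f x))
    (fun x y => eq_trans (f_equal (hfun g) (hmul _ _ f x y)) (hmul _ _ g (f x) (f y))).

Record GrpFunctor : Type := MkFunctor {
  Fobj :> Group -> Group;
  Fmap : forall G H : Group, Hom G H -> Hom (Fobj G) (Fobj H);
  Fmap_id : forall G (x : Fobj G), Fmap G G (idHom G) x = x;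
  Fmap_comp : forall G H K (g : Hom H K) (f : Hom G H) (x : Fobj G),
      Fmap G K (compHom g f) x = Fmap H K g (Fmap G H f x)
}.

Record IdQuotient : Type := MkIdQuotient {
  QF :> GrpFunctor;
  qnat : forall G : Group, Hom G (QF G);
  qnat_natural : forall (G H : Group) (f : Hom G H) (x : G),
      Fmap QF G H f (qnat G x) = qnat H (f x);
  qnat_surj : forall (G : Group) (y : QF G), exists x : G, qnat G x = y
}.

Definition nontrivial_quotient (Q : IdQuotient) : Prop :=
  exists (G : Group) (y : Q G), y <> gone (Q G).

Fixpoint gpow_nat (G : Group) (g : G) (n : nat) : G :=
  match n with
  | O => gone G
  | S n => gmul G g (gpow_nat G g n)
  end.

Definition gpow (G : Group) (g : G) (k : Z) : G :=
  match k with
  | Z0 => gone G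
  | Zpos p => gpow_nat G g (Pos.to_nat p)
  | Zneg p => ginv G (gpow_nat G g (Pos.to_nat p))
  end.

Definition nontrivial_finite_cyclic (H : Group) : Prop :=
  (exists g : H, forall a : H, exists k : Z, a = gpow H g k) /\
  (exists l : list H, forall a : H, In a l) /\
  (exists a : H, a <> gone H).

(* Finitely supported functions X -> Z, i.e. elements of Z^{(+)X}. *)
Definition fin_supp {X : Type} (f : X -> Z) : Prop :=
  exists l : list X, forall x, f x <> 0 -> In x l.

Definition iso_free_abelian (H : Group) (X : Type) : Prop :=
  exists phi : H -> (X -> Z),
    (forall a, fin_supp (phi a)) /\
    (forall a b, phi (gmul H a b) = fun x => phi a x + phi b x) /\
    (forall a b, phi a = phi b -> a = b) /\
    (forall f : X -> Z, fin_supp f -> exists a, phi a = f).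

Definition in_ess_image (Q : IdQuotient) (P : Group -> Prop) : Prop :=
  exists G : Group, P (Q G).

(* Main.v *)
Require Import Defs.
From Stdlib Require Import ZArith List Lia Classical ClassicalEpsilon ProofIrrelevance FunctionalExtensionality.
Open Scope Z_scope.

Section GL.
Variable G : Group.

Lemma gmulV (x : G) : gmul G x (ginv G x) = gone G.
Proof.
  rewrite <- (gmul1l G (gmul G x (ginv G x))).
  rewrite <- (gmulVl G (ginv G x)) at 1.
  rewrite <- gmulA. rewrite (gmulA G (ginv G x) x (ginv G x)).
  rewrite (gmulVl G x), gmul1l. apply gmulVl.
Qed.

Lemma gmul1r (x : G) : gmul G x (gone G) = x.
Proof.
  rewrite <- (gmulVl G x), gmulA, gmulV, gmul1l. reflexivity.
Qed.

Lemma gcancel (a b c : G) : gmul G a b = gmul G a c -> b = c.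
Proof.
  intro H. rewrite <- (gmul1l G b), <- (gmul1l G c), <- (gmulVl G a), <- !gmulA, H.
  reflexivity.
Qed.

Lemma ginv_uniq (a b : G) : gmul G a b = gone G -> a = ginv G b.
Proof.
  intro H. rewrite <- (gmul1r a), <- (gmulV b), gmulA, H, gmul1l. reflexivity.
Qed.

Lemma ginv1 : ginv G (gone G) = gone G.
Proof. symmetry. apply ginv_uniq. apply gmul1l. Qed.

Lemma ginvM (a b : G) : ginv G (gmul G a b) = gmul G (ginv G b) (ginv G a).
Proof.
  symmetry. apply ginv_uniq.
  rewrite <- gmulA, (gmulA G (ginv G a) a b), gmulVl, gmul1l. apply gmulVl.
Qed.

Lemma gpow_nat_succ_r (g : G) n : gpow_nat G g (S n) = gmul G (gpow_nat G g n) g.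
Proof.
  induction n as [|n IH].
  - simpl. rewrite gmul1l, gmul1r. reflexivity.
  - change (gpow_nat G g (S (S n))) with (gmul G g (gpow_nat G g (S n))).
    rewrite IH at 1. rewrite gmulA. reflexivity.
Qed.

Lemma gpow_of_nat (g : G) n : gpow G g (Z.of_nat n) = gpow_nat G g n.
Proof.
  destruct n; simpl; [reflexivity|]. rewrite SuccNat2Pos.id_succ. reflexivity.
Qed.

Lemma gpow_opp_nat (g : G) n : gpow G g (- Z.of_nat n) = ginv G (gpow_nat G g n).
Proof.
  destruct n; simpl; [rewrite ginv1; reflexivity|]. rewrite SuccNat2Pos.id_succ. reflexivity.
Qed.

Lemma gpow_succ (g : G) k : gpow G g (k + 1) = gmul G (gpow G g k) g.
Proof.
  destruct (Z_le_gt_dec 0 k) as [Hk|Hk].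
  - replace k with (Z.of_nat (Z.to_nat k)) by (apply Z2Nat.id; lia).
    replace (Z.of_nat (Z.to_nat k) + 1) with (Z.of_nat (S (Z.to_nat k))) by lia.
    rewrite !gpow_of_nat. apply gpow_nat_succ_r.
  - set (n := Z.to_nat (- k - 1)).
    replace k with (- Z.of_nat (S n)) by (unfold n; lia).
    replace (- Z.of_nat (S n) + 1) with (- Z.of_nat n) by lia.
    rewrite !gpow_opp_nat. simpl. rewrite ginvM, <- gmulA, gmulVl, gmul1r. reflexivity.
Qed.

Lemma gpow_pred (g : G) k : gpow G g (k - 1) = gmul G (gpow G g k) (ginv G g).
Proof.
  replace k with ((k - 1) + 1) at 2 by lia.
  rewrite gpow_succ, <- gmulA, gmulV, gmul1r. reflexivity.
Qed.

Lemma gpow_add (g : G) m n : gpow G g (m + n) = gmul G (gpow G g m) (gpow G g n).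
Proof.
  revert m. induction n using Z.peano_ind; intro m.
  - rewrite Z.add_0_r. simpl. rewrite gmul1r. reflexivity.
  - rewrite <- !Z.add_1_r, Z.add_assoc, !gpow_succ, IHn, gmulA. reflexivity.
  - rewrite <- !Z.sub_1_r, Z.add_sub_assoc, !gpow_pred, IHn, gmulA. reflexivity.
Qed.

End GL.

Lemma hom_one (G H : Group) (h : Hom G H) : h (gone G) = gone H.
Proof.
  apply (gcancel H (h (gone G))). rewrite <- hmul, gmul1l, gmul1r. reflexivity.
Qed.

Lemma hom_inv (G H : Group) (h : Hom G H) x : h (ginv G x) = ginv H (h x).
Proof.
  apply ginv_uniq. rewrite <- hmul, gmulVl. apply hom_one.
Qed.

Lemma hom_gpow_nat (G H : Group) (h : Hom G H) g n :
  h (gpow_nat G g n) = gpow_nat H (h g) n.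
Proof.
  induction n; simpl. apply hom_one. rewrite hmul, IHn. reflexivity.
Qed.

Lemma hom_gpow (G H : Group) (h : Hom G H) g k :
  h (gpow G g k) = gpow H (h g) k.
Proof.
  destruct k; simpl. apply hom_one. apply hom_gpow_nat.
  rewrite hom_inv, hom_gpow_nat. reflexivity.
Qed.

Definition Zg : Group := MkGroup Z Z.add 0 Z.opp Z.add_assoc Z.add_0_l Z.add_opp_diag_l.

Lemma gpow_Zg_nat n : gpow_nat Zg 1 n = Z.of_nat n.
Proof. induction n. reflexivity. rewrite Nat2Z.inj_succ. change (gpow_nat Zg 1 (S n)) with (1 + gpow_nat Zg 1 n). rewrite IHn. lia. Qed.

Lemma gpow_Zg k : gpow Zg 1 k = k.
Proof.
  destruct k; simpl; try reflexivity; rewrite gpow_Zg_nat; lia.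
Qed.

Definition powHom (G : Group) (g : G) : Hom Zg G :=
  MkHom Zg G (gpow G g) (gpow_add G g).

Section FA.
Variable X : Type.

Definition FAc := {f : X -> Z | fin_supp f}.

Lemma FA_ext (a b : FAc) : proj1_sig a = proj1_sig b -> a = b.
Proof.
  destruct a as [a Ha], b as [b Hb]; simpl; intro E; subst; f_equal; apply proof_irrelevance.
Qed.

Lemma fs_add (f g : X -> Z) : fin_supp f -> fin_supp g -> fin_supp (fun x => f x + g x).
Proof.
  intros [l1 H1] [l2 H2]. exists (l1 ++ l2). intros x Hx. apply in_or_app.
  destruct (Z.eq_dec (f x) 0); [right; apply H2; lia | left; apply H1; lia].
Qed.

Lemma fs_opp (f : X -> Z) : fin_supp f -> fin_supp (fun x => - f x).
Proof. intros [l H]. exists l. intros x Hx. apply H. lia. Qed.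

Lemma fs_0 : fin_supp (fun _ : X => 0).
Proof. exists nil. intros x Hx. lia. Qed.

Definition FAmul (a b : FAc) : FAc :=
  exist _ _ (fs_add _ _ (proj2_sig a) (proj2_sig b)).
Definition FAone : FAc := exist _ _ fs_0.
Definition FAinv (a : FAc) : FAc := exist _ _ (fs_opp _ (proj2_sig a)).

Lemma FAmulA x y z : FAmul x (FAmul y z) = FAmul (FAmul x y) z.
Proof. apply FA_ext; simpl. extensionality t. lia. Qed.
Lemma FAmul1l x : FAmul FAone x = x.
Proof. apply FA_ext; simpl. extensionality t. lia. Qed.
Lemma FAmulVl x : FAmul (FAinv x) x = FAone.
Proof. apply FA_ext; simpl. extensionality t. lia. Qed.

Definition FA : Group := MkGroup FAc FAmul FAone FAinv FAmulA FAmul1l FAmulVl.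

Definition projHom (x : X) : Hom FA Zg :=
  MkHom FA Zg (fun a => proj1_sig a x) (fun a b => eq_refl).
End FA.

Theorem theorem3p13 (Q : IdQuotient) (HQ : nontrivial_quotient Q) :
  in_ess_image Q nontrivial_finite_cyclic \/
  (forall X : Type, in_ess_image Q (fun H => iso_free_abelian H X)).
Proof.
  set (q := qnat Q Zg).
  assert (Hq1 : q 1 <> gone (Q Zg)).
  { destruct HQ as [G [y Hy]]. destruct (qnat_surj Q G y) as [g Hg].
    intro E. apply Hy. rewrite <- Hg.
    pose proof (qnat_natural Q Zg G (powHom G g) 1) as N.
    fold q in N. rewrite E, hom_one in N. change (hfun (powHom G g) 1) with (gmul G g (gone G)) in N. rewrite gmul1r in N. rewrite N. reflexivity. }
  destruct (classic (forall m n, q m = q n -> m = n)) as [Hinj|Hni].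
  - right. intro X. exists (FA X).
    assert (psiex : forall y : Q Zg, {k : Z | q k = y}).
    { intro y. apply constructive_indefinite_description. exact (qnat_surj Q Zg y). }
    set (psi := fun y => proj1_sig (psiex y)).
    assert (Hpsi : forall k, psi (q k) = k).
    { intro k. apply Hinj. unfold psi. apply (proj2_sig (psiex (q k))). }
    set (phi := fun (y : Q (FA X)) (x : X) => psi (Fmap Q _ _ (projHom X x) y)).
    assert (Hphi : forall a, phi (qnat Q (FA X) a) = proj1_sig a).
    { intro a. unfold phi. extensionality x. rewrite qnat_natural. apply Hpsi. }
    exists phi. split; [|split; [|split]].
    + intro y. destruct (qnat_surj Q _ y) as [a <-]. rewrite Hphi. apply (proj2_sig a).
    + intros y y'. destruct (qnat_surj Q _ y) as [a <-].
      destruct (qnat_surj Q _ y') as [b <-].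
      rewrite <- hmul, !Hphi. reflexivity.
    + intros y y'. destruct (qnat_surj Q _ y) as [a <-].
      destruct (qnat_surj Q _ y') as [b <-].
      rewrite !Hphi. intro E. f_equal. apply FA_ext. exact E.
    + intros f Hf. exists (qnat Q (FA X) (exist _ f Hf)). rewrite Hphi. reflexivity.
  - left. exists Zg.
    assert (Hex : exists m n, m < n /\ q m = q n).
    { apply not_all_ex_not in Hni. destruct Hni as [m Hm].
      apply not_all_ex_not in Hm. destruct Hm as [n Hn].
      apply imply_to_and in Hn. destruct Hn as [E Hne].
      destruct (Z_lt_ge_dec m n).
      - exists m, n. split; auto.
      - exists n, m. split; [lia | auto]. }
    destruct Hex as [m [n [Hmn E]]].
    set (k := n - m).
    assert (Hk : q k = gone (Q Zg)).
    { apply (gcancel _ (q m)). rewrite gmul1r. unfold q. rewrite <- hmul. fold q.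
      simpl. unfold k. replace (m + (n - m)) with n by lia. auto. }
    assert (Hper : forall a, q (a + k) = q a).
    { intro a. unfold q. change (a + k) with (gmul Zg a k). rewrite hmul. fold q.
      rewrite Hk, gmul1r. reflexivity. }
    assert (Hpern : forall a t, q (a + k * Z.of_nat t) = q a).
    { intros a t. induction t. rewrite Z.mul_0_r, Z.add_0_r. reflexivity.
      rewrite <- IHt, <- (Hper (a + k * Z.of_nat t)). f_equal. lia. }
    assert (Hmod : forall a, q a = q (a mod k)).
    { intro a. pose proof (Z.div_mod a k ltac:(lia)) as D.
      destruct (Z_le_gt_dec 0 (a / k)).
      - rewrite D at 1. rewrite Z.add_comm.
        replace (a / k) with (Z.of_nat (Z.to_nat (a / k))) by (apply Z2Nat.id; lia).
        apply Hpern.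
      - rewrite <- (Hpern a (Z.to_nat (- (a / k)))). f_equal.
        rewrite Z2Nat.id by lia. lia. }
    split; [|split].
    + exists (q 1). intro y. destruct (qnat_surj Q Zg y) as [b <-]. exists b.
      fold q. rewrite <- (gpow_Zg b) at 1. unfold q. apply hom_gpow.
    + exists (map (fun i => q (Z.of_nat i)) (seq 0 (Z.to_nat k))).
      intro y. destruct (qnat_surj Q Zg y) as [b <-]. fold q. rewrite Hmod.
      pose proof (Z.mod_pos_bound b k ltac:(lia)).
      replace (b mod k) with (Z.of_nat (Z.to_nat (b mod k))) by (apply Z2Nat.id; lia).
      apply (in_map (fun i : nat => q (Z.of_nat i))). apply in_seq. lia.
    + exists (q 1). exact Hq1.
Qed.
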